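(* Let $B\subset A$ be an arbitrary ring extension. Let $G=A\otimes_B-$ and $T=\operatorname{Hom}_B(A,-)$ be the functors from left $B$-modules to left $A$-modules. Then the following are equivalent: (a) there exists an $A$-bimodule homomorphism $\Delta:A\to A\otimes_BA$; (b) there exists a natural transformation $\eta:T\to G$.
   Context: For a left $B$-module $N$, $G(N)=A\otimes_BN$ with left $A$-action on the first factor, and $T(N)=\operatorname{Hom}_B(A,N)$ (left $B$-linear maps) with left $A$-module structure $(a\cdot\gamma)(b)=\gamma(ba)$; on morphisms $G(f)=A\otimes_Bf$ and $T(f)=f\circ-$. $A\otimes_BA$ is an $A$-bimodule via $a(x\otimes y)b=ax\otimes yb$. A natural transformation $\eta:T\to G$ consists of left $A$-module maps $\eta_N:T(N)\to G(N)$ natural in $N$. *)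

(* Defs.v *)
(* Ring extension B ⊂ A given by an injective ring morphism
   i : B -> A.
   The Tens product A ⊗_B N is built as the abelian group presented by
   generators a ⊗ n and the usual relations (a quotient of formal sums). *)
From HB Require Import structures.
From mathcomp Require Import all_boot all_order all_algebra.
From Stdlib Require Import ClassicalEpsilon.
Set Implicit Arguments. Unset Strict Implicit. Unset Printing Implicit Defensive.
Import GRing.Theory.
Local Open Scope ring_scope.

Section RingExt.
Variables (B A : nzRingType) (i : {rmorphism B -> A}).

Definition ABof (j : {rmorphism B -> A}) : Type := A.
Local Notation AB := (ABof i).
HB.instance Definition _ := GRing.Zmodule.on AB.
Definition AB_scale (b : B) (x : AB) : AB := (i b * (x : A) : A).
Fact AB_scalerA a b v : AB_scale a (AB_scale b v) = AB_scale (a * b) v.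
Proof. by rewrite /AB_scale rmorphM mulrA. Qed.
Fact AB_scale1r : left_id 1 AB_scale.
Proof. by move=> v; rewrite /AB_scale rmorph1 mul1r. Qed.
Fact AB_scalerDr : right_distributive AB_scale +%R.
Proof. by move=> a u v; rewrite /AB_scale mulrDr. Qed.
Fact AB_scalerDl v : {morph AB_scale^~ v : a b / a + b}.
Proof. by move=> a b; rewrite /AB_scale rmorphD mulrDl. Qed.
HB.instance Definition _ := GRing.Zmodule_isLmodule.Build B AB
  AB_scalerA AB_scale1r AB_scalerDr AB_scalerDl.

Section Hom.
Variable N : lmodType B.
Record BHom := Hom {
  hfun :> A -> N;
  hfunD : forall x y, hfun (x + y) = hfun x + hfun y;
  hfunZ : forall (b : B) x, hfun (i b * x) = b *: hfun x }.

Definition hadd (g h : BHom) : BHom.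
Proof.
refine (@Hom (fun x => g x + h x) _ _).
- by move=> x y; rewrite !hfunD addrACA.
- by move=> b x; rewrite !hfunZ scalerDr.
Defined.

Definition hact (a : A) (g : BHom) : BHom.
Proof.
refine (@Hom (fun x => g (x * a)) _ _).
- by move=> x y; rewrite mulrDl hfunD.
- by move=> b x; rewrite -mulrA hfunZ.
Defined.
End Hom.

Definition hmap (N N' : lmodType B) (f : {linear N -> N'}) (g : BHom N) : BHom N'.
Proof.
refine (@Hom _ (fun x => f (g x)) _ _).
- by move=> x y; rewrite hfunD linearD.
- by move=> b x; rewrite hfunZ linearZ.
Defined.

Section Tensor.
Variable N : lmodType B.
Definition fsum := seq (A * N).

Inductive tstep : fsum -> fsum -> Prop :=
| ts_comm x y : tstep [:: x; y] [:: y; x]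
| ts_addl a a' n : tstep [:: (a + a', n)] [:: (a, n); (a', n)]
| ts_addr a n n' : tstep [:: (a, n + n')] [:: (a, n); (a, n')]
| ts_bal a b n : tstep [:: (a * i b, n)] [:: (a, b *: n)]
| ts_zero n : tstep [:: (0, n)] [::].

Inductive teq : fsum -> fsum -> Prop :=
| teq_step l1 s s' l2 : tstep s s' -> teq (l1 ++ s ++ l2) (l1 ++ s' ++ l2)
| teq_refl s : teq s s
| teq_sym s t : teq s t -> teq t s
| teq_trans s t u : teq s t -> teq t u -> teq s u.

Definition Tens : Type := {P : fsum -> Prop | exists s, P = teq s}.
Definition tcl (s : fsum) : Tens := exist _ (teq s) (ex_intro _ s erefl).
Definition trep (x : Tens) : fsum :=
  proj1_sig (constructive_indefinite_description _ (proj2_sig x)).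

Definition tzero : Tens := tcl [::].
Definition tadd (x y : Tens) : Tens := tcl (trep x ++ trep y).
Definition tact (a : A) (x : Tens) : Tens :=
  tcl (map (fun p => (a * p.1, p.2)) (trep x)).
End Tensor.

Definition tmap (N N' : lmodType B) (f : {linear N -> N'}) (x : Tens N)
  : Tens N' := tcl (map (fun p => (p.1, f p.2)) (trep x)).

Definition tactr (x : Tens AB) (a : A) : Tens AB :=
  tcl (map (fun p => (p.1, (p.2 : A) * a : AB)) (trep x)).

Definition bimod_hom (D : A -> Tens AB) : Prop :=
  [/\ forall x y, D (x + y) = tadd (D x) (D y),
      forall a x, D (a * x) = tact a (D x)
    & forall x a, D (x * a) = tactr (D x) a].

Definition nat_trans (eta : forall N : lmodType B, BHom N -> Tens N) : Prop :=
  [/\ forall (N : lmodType B) (g h : BHom N), eta N (hadd g h) = tadd (eta N g) (eta N h),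
      forall (N : lmodType B) (a : A) (g : BHom N), eta N (hact a g) = tact a (eta N g)
    & forall (N N' : lmodType B) (f : {linear N -> N'}) (g : BHom N),
        eta N' (hmap f g) = tmap f (eta N g)].
End RingExt.

(* Main.v *)
Require Import Defs.
From HB Require Import structures.
From mathcomp Require Import all_boot all_order all_algebra.
From Stdlib Require Import ClassicalEpsilon FunctionalExtensionality PropExtensionality ProofIrrelevance.
Set Implicit Arguments. Unset Strict Implicit. Unset Printing Implicit Defensive.
Import GRing.Theory.
Local Open Scope ring_scope.

Section Proofs.
Variables (B A : nzRingType) (i : {rmorphism B -> A}).

Definition rmul (a : A) (x : ABof i) : ABof i := ((x : A) * a : A).
Lemma rmul_lin a : linear (rmul a).
Proof. by move=> b x y; rewrite /rmul mulrDl; congr (_ + _); rewrite /= /AB_scale -mulrA. Qed.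
HB.instance Definition _ a := GRing.isLinear.Build B (ABof i) (ABof i) *:%R (rmul a) (rmul_lin a).

Lemma bhom_eq (N : lmodType B) (g h : BHom i N) : (forall x, g x = h x) -> g = h.
Proof.
case: g h => g gD gZ [h hD hZ] /= e.
have E : g = h by apply: functional_extensionality.
subst h; f_equal; apply: proof_irrelevance.
Qed.

Section T.
Variable N : lmodType B.
Implicit Types s t : fsum A N.

Lemma step0 s t : tstep i s t -> teq i s t.
Proof. by move=> h; have := teq_step [::] [::] h; rewrite /= !cats0. Qed.

Lemma teq_ctx (l r s t : fsum A N) : teq i s t -> teq i (l ++ s ++ r) (l ++ t ++ r).
Proof.
elim=> {s t}.
- move=> l1 s s' l2 h. rewrite !catA -!(catA (l ++ l1)) -!(catA _ _ r).
  exact: teq_step.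
- by move=> s; apply: teq_refl.
- by move=> s t _ h; apply: teq_sym.
- by move=> s t u _ h1 _ h2; apply: teq_trans h2.
Qed.

Lemma teq_cat s s' t t' : teq i s s' -> teq i t t' -> teq i (s ++ t) (s' ++ t').
Proof.
move=> h1 h2; apply: (teq_trans (t := s' ++ t)).
  by have := teq_ctx [::] t h1.
by have := teq_ctx s' [::] h2; rewrite /= !cats0.
Qed.

Lemma swap_front (u : A * N) (l r : fsum A N) : teq i (u :: l ++ r) (l ++ u :: r).
Proof.
elim: l => [|v l IH] /=; first exact: teq_refl.
apply: (teq_trans (t := v :: u :: l ++ r)).
  by have := teq_step [::] (l ++ r) (ts_comm i u v).
by have := teq_cat (teq_refl i [:: v]) IH.
Qed.

Lemma trep_tcl s : teq i s (trep (tcl i s)).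
Proof.
rewrite /trep; case: constructive_indefinite_description => r /= e.
by rewrite e; apply: teq_refl.
Qed.

Lemma tcl_eq s t : teq i s t -> tcl i s = tcl i t.
Proof.
move=> h; rewrite /tcl.
have E : teq i s = teq i t.
  apply: functional_extensionality => u; apply: propositional_extensionality.
  split=> h'; [apply: teq_trans h'; exact: teq_sym | exact: teq_trans h h'].
move: (ex_intro _ s _) (ex_intro _ t _); rewrite E => p q.
by rewrite (proof_irrelevance _ p q).
Qed.

Lemma tcl_inj s t : tcl i s = tcl i t -> teq i s t.
Proof. by move=> /(f_equal (@proj1_sig _ _)) /= ->; apply: teq_refl. Qed.
End T.

Lemma teq_map (N N' : lmodType B) (phi : A * N -> A * N') :
  (forall s t, tstep i s t -> teq i (map phi s) (map phi t)) ->
  forall s t, teq i s t -> teq i (map phi s) (map phi t).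
Proof.
move=> H s t; elim=> {s t}.
- move=> l1 s s' l2 h; rewrite !map_cat; apply: teq_cat; first exact: teq_refl.
  apply: teq_cat; [exact: H|exact: teq_refl].
- by move=> s; apply: teq_refl.
- by move=> s t _ h; apply: teq_sym.
- by move=> s t u _ h1 _ h2; apply: teq_trans h2.
Qed.

Lemma teq_map2 (N N' : lmodType B) (h : N -> N')
  (hD : forall x y, h (x + y) = h x + h y) (hZ : forall b x, h (b *: x) = b *: h x) :
  forall s t, teq i s t -> teq i (map (fun p => (p.1, h p.2)) s) (map (fun p => (p.1, h p.2)) t).
Proof.
apply: teq_map => s t [] /=.
- move=> x y; apply: step0; exact: ts_comm.
- move=> a a' n; apply: step0; exact: ts_addl.
- move=> a n n'; rewrite hD; apply: step0; exact: ts_addr.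
- move=> a b n; rewrite hZ; apply: step0; exact: ts_bal.
- move=> n; apply: step0; exact: ts_zero.
Qed.

Lemma teq_map1 (N : lmodType B) (a : A) :
  forall s t : fsum A N, teq i s t ->
    teq i (map (fun p => (a * p.1, p.2)) s) (map (fun p => (a * p.1, p.2)) t).
Proof.
apply: teq_map => s t [] /=.
- move=> x y; apply: step0; exact: ts_comm.
- move=> x x' n; rewrite mulrDr; apply: step0; exact: ts_addl.
- move=> x n n'; apply: step0; exact: ts_addr.
- move=> x b n; rewrite mulrA; apply: step0; exact: ts_bal.
- move=> n; rewrite mulr0; apply: step0; exact: ts_zero.
Qed.

Lemma map_add (N : lmodType B) (g h : A -> N) (s : fsum A (ABof i)) :
  teq i (map (fun p => (p.1, g p.2 + h p.2)) s)
        (map (fun p => (p.1, g p.2)) s ++ map (fun p => (p.1, h p.2)) s).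
Proof.
elim: s => [|[x y] s IH] /=; first exact: teq_refl.
apply: (teq_trans (t := (x, g y) :: (x, h y) :: (map (fun p => (p.1, g p.2)) s ++ map (fun p => (p.1, h p.2)) s))).
  have := teq_step [::] (map (fun p => (p.1, g p.2 + h p.2)) s) (ts_addr i x (g y) (h y)).
  move=> /= H; apply: teq_trans H _.
  exact: (teq_cat (teq_refl i [:: (x, g y); (x, h y)]) IH).
have := teq_cat (teq_refl i [:: (x, g y)]) (swap_front (x, h y) (map (fun p => (p.1, g p.2)) s) (map (fun p => (p.1, h p.2)) s)); exact.
Qed.

Lemma teq_mapB (N : lmodType B) (g : BHom i N) (s t : fsum A (ABof i)) :
  teq i s t -> teq i (map (fun p => (p.1, g p.2)) s) (map (fun p => (p.1, g p.2)) t).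
Proof.
apply: (@teq_map2 (ABof i) N (fun x : ABof i => g x)).
- move=> x y; exact: hfunD.
- move=> b x; exact: hfunZ.
Qed.

End Proofs.

Theorem theorem23 (B A : nzRingType) (i : {rmorphism B -> A}) (i_inj : injective i) :
  (exists Delta : A -> Tens i (ABof i), bimod_hom Delta) <->
  (exists eta : forall N : lmodType B, BHom i N -> Tens i N, nat_trans eta).
Proof.
split.
- case=> D [DD DL DR].
  pose s := trep (D 1).
  exists (fun N g => tcl i (map (fun p => (p.1, g p.2)) s)); split.
  + move=> N g h /=; apply: tcl_eq.
    apply: teq_trans (map_add g h s) _.
    apply: teq_cat; exact: trep_tcl.
  + move=> N a g /=; apply: tcl_eq.
    have E : teq i (map (fun p => (p.1, (p.2 : A) * a : ABof i)) s)
                   (map (fun p => (a * p.1, p.2)) s).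
      apply: tcl_inj; transitivity (D a).
        by have -> : D a = D (1 * a) by rewrite mul1r.
      by have -> : D a = D (a * 1) by rewrite mulr1.
    have := teq_mapB g E; rewrite -!map_comp /comp /= => H.
    apply: teq_trans H _.
    have := teq_map1 a (trep_tcl i (map (fun p => (p.1, g p.2)) s)).
    by rewrite -map_comp /comp /=.
  + move=> N N' f g /=; apply: tcl_eq.
    have := @teq_map2 _ _ i N N' f (fun x y => linearD f x y) (fun b x => linearZ_LR f b x) _ _ (trep_tcl i (map (fun p => (p.1, g p.2)) s)).
    by rewrite -map_comp /comp /=.
- case=> eta [eD eL eN].
  pose id0 : BHom i (ABof i) := @Defs.Hom B A i (ABof i) (fun x => x) (fun x y => erefl) (fun b x => erefl).
  exists (fun a => eta _ (hact a id0)); split.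
  + move=> x y; rewrite -eD; congr (eta _ _); apply: bhom_eq => z /=; exact: mulrDr.
  + move=> a x; rewrite -eL; congr (eta _ _); apply: bhom_eq => z /=; exact: mulrA.
  + move=> x a; have -> : hact (x * a) id0 = hmap (@rmul _ _ i a : {linear _ -> _}) (hact x id0).
      by apply: bhom_eq => z /=; rewrite /rmul /= mulrA.
    by rewrite eN.
Qed.
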